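(* Let $r\ge 1$, $m=2^r$, and let $n$ be a positive integer with $m\mid n$. Let $b$ be an odd positive integer having property $\mathcal{P}$ with respect to $n$. Then $x^n+b^m$ is irreducible over $\mathbb{Z}$.
   Context: For a positive integer $N$, a positive integer $b$ has property $\mathcal{P}$ with respect to $N$ if either $b$ is a prime number, or $b=(p_1^{b_1}p_2^{b_2}\cdots p_k^{b_k})^d$ where $k\ge 2$, $p_1,\dots,p_k$ are distinct primes, $b_1,\dots,b_k\ge 1$, $\gcd(b_1,\ldots,b_k)=1$, and $d$ is a positive integer with $\gcd(d,N)=1$. A monic polynomial in $\mathbb{Z}[x]$ of degree $\ge 1$ is irreducible over $\mathbb{Z}$ if it is not a product of two polynomials in $\mathbb{Z}[x]$ of degree at least $1$. *)

(* Defs.v *)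
From mathcomp Require Import all_boot all_order all_algebra.
Set Implicit Arguments. Unset Strict Implicit. Unset Printing Implicit Defensive.
Import GRing.Theory Num.Theory.

Definition propP (N b : nat) : Prop :=
  prime b \/
  exists (ps es : seq nat) (d : nat),
    [/\ size ps = size es, (2 <= size ps)%N, uniq ps & all prime ps] /\
    [/\ all (fun e => 0 < e) es,
        (\big[gcdn/0]_(e <- es) e = 1)%N,
        0 < d & coprime d N] /\
    b = (\prod_(i < size ps) (nth 0 ps i) ^ (nth 0 es i)) ^ d.

Local Open Scope ring_scope.

Definition irreducible_over_Z (p : {poly int}) : Prop :=
  p \is monic /\ (1 < size p)%N /\
  forall q r : {poly int}, p = q * r -> (size q <= 1)%N \/ (size r <= 1)%N.

(* Main.v *)
Require Import Defs.
From mathcomp Require Import all_boot all_order all_algebra all_field ring zify.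
Set Implicit Arguments. Unset Strict Implicit. Unset Printing Implicit Defensive.
Import GRing.Theory Num.Theory.
Local Open Scope ring_scope.

Section EvenOdd.
Variable R : comNzRingType.
Implicit Types p q : {poly R}.

Lemma even_comp2 p : even_poly (p \Po 'X^2) = p.
Proof.
apply/polyP => i; rewrite coef_even_poly coef_comp_poly_Xn //.
by rewrite -muln2 dvdn_mull // mulnK.
Qed.

Lemma odd_comp2 p : odd_poly (p \Po 'X^2) = 0.
Proof.
apply/polyP => i; rewrite coef_odd_poly coef_comp_poly_Xn // coef0.
by rewrite -[i.*2.+1]addn1 -muln2 dvdn_addr ?dvdn_mull // .
Qed.

Lemma compNX p :
  p \Po (- 'X) = (even_poly p \Po 'X^2) - (odd_poly p \Po 'X^2) * 'X.
Proof.
rewrite -{1}(poly_even_odd p) comp_polyD comp_polyM comp_polyX.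
rewrite -!comp_polyA comp_Xn_poly sqrrN mulrN.
by [].
Qed.





End EvenOdd.

Section Idom.
Variable R : idomainType.
Implicit Types p q : {poly R}.

Lemma even_mulX2 p q :
  even_poly (p * (q \Po 'X^2)) = even_poly p * q.
Proof.
rewrite -{1}(poly_even_odd p) mulrDl mulrAC -!comp_polyM even_polyD.
by rewrite even_comp2 even_polyMX odd_comp2 mul0r addr0.
Qed.

Lemma dvdp_compX2 p q : (p \Po 'X^2) %| (q \Po 'X^2) -> p %| q.
Proof.
case/Pdiv.Idomain.dvdpP => [[c r]] /= c0 e.
apply/Pdiv.Idomain.dvdpP; exists (c, even_poly r) => //=.
by rewrite -(even_comp2 q) -even_polyZ e even_mulX2.
Qed.

Lemma mulNX p :
  p * (p \Po (- 'X)) =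
  ((even_poly p)^+2 - 'X * (odd_poly p)^+2) \Po 'X^2.
Proof.
rewrite compNX -{1}(poly_even_odd p) !expr2.
rewrite comp_polyB !comp_polyM comp_polyX.
set A := _ \Po _; set B := _ \Po _.
ring.
Qed.
End Idom.

Definition fN (N c : nat) : {poly int} := 'X^N + (c%:R)%:P.
Definition SN (N c : nat) := forall q : {poly int},
  q %| fN N c -> (size q <= 1)%N \/ size q = N.+1.

Lemma scaleI_poly (R : idomainType) (a : R) (p q : {poly R}) :
  a != 0 -> a *: p = a *: q -> p = q.
Proof.
move=> a0; rewrite -!mul_polyC => /mulfI; apply; by rewrite polyC_eq0.
Qed.

Lemma size_fN N c : (0 < N)%N -> size (fN N c) = N.+1.
Proof. exact: size_XnaddC. Qed.

Lemma fN_neq0 N c : (0 < N)%N -> fN N c != 0.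
Proof. by move=> N0; rewrite -size_poly_eq0 size_fN. Qed.

Lemma lead_fN N c : (0 < N)%N -> lead_coef (fN N c) = 1.
Proof. exact: lead_coefXnaddC. Qed.

Lemma horner_fN0 N c : (0 < N)%N -> (fN N c).[0] = c%:R.
Proof. by case: N => // N _; rewrite /fN hornerD hornerXn hornerC expr0n add0r. Qed.

Lemma horner_fN1 N c : (fN N c).[1] = 1 + c%:R.
Proof. by rewrite /fN hornerD hornerXn hornerC expr1n. Qed.

Lemma fN2 M c : fN M.*2 c = fN M c \Po 'X^2.
Proof.
by rewrite /fN comp_polyD comp_polyC comp_Xn_poly -exprM mulnC muln2.
Qed.

Lemma fN2N M c : fN M.*2 c \Po (- 'X) = fN M.*2 c.
Proof.
by rewrite /fN comp_polyD comp_polyC comp_Xn_poly -mul2n !exprM sqrrN.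
Qed.

Lemma size_NX : size (- 'X : {poly int}) = 2.
Proof. by rewrite size_polyN size_polyX. Qed.

Lemma lead_NX : lead_coef (- 'X : {poly int}) = -1.
Proof. by rewrite lead_coefN lead_coefX. Qed.

Lemma size_compX2 (p : {poly int}) : p != 0 ->
  size (p \Po 'X^2) = ((size p).-1 * 2).+1.
Proof.
move=> p0; have := size_comp_poly p 'X^2; rewrite size_polyXn /= => <-.
by rewrite prednK // size_poly_gt0 comp_poly_eq0 ?size_polyXn.
Qed.
Lemma parity (e o : int) (c : nat) : (c %% 4 = 1)%N ->
  (1 + c%:R = (e+o)*(e-o) \/ 1 + c%:R = - ((e+o)*(e-o))) -> False.
Proof.
move=> c4.
have [k ck] : exists k, c = (4 * k + 1)%N by exists (c %/ 4)%N; rewrite {1}(divn_eq c 4) c4 mulnC.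
have [a [i [ha hi]]] : exists a i : int, e = 2 * a + i /\ (i = 0 \/ i = 1).
  exists (e %/ 2)%Z, (e %% 2)%Z; split; first by rewrite {1}(divz_eq e 2) mulrC.
  have := modz_ge0 e (isT : (2:int) != 0); have := ltz_pmod e (isT : (0 < 2 :> int)). lia.
have [b [j [hb hj]]] : exists a i : int, o = 2 * a + i /\ (i = 0 \/ i = 1).
  exists (o %/ 2)%Z, (o %% 2)%Z; split; first by rewrite {1}(divz_eq o 2) mulrC.
  have := modz_ge0 o (isT : (2:int) != 0); have := ltz_pmod o (isT : (0 < 2 :> int)). lia.
subst; case: hi => ->; case: hj => -> ; nia.
Qed.

Lemma int_mul_eq1_aux (u v : int) : u * v = 1 -> 1 <= u -> u = v.
Proof.
move=> h hu; have [hv|hv] : (v <= 0 \/ 1 <= v) by lia.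
  have : u * v <= 0 by nia.
  by rewrite h.
nia.
Qed.

Lemma int_mul_eq1 (u v : int) : u * v = 1 -> u = v.
Proof.
move=> h; have [hu|hu] : (u <= 0 \/ 1 <= u) by lia.
  have h' : (- u) * (- v) = 1 by rewrite mulrNN.
  have hu' : 1 <= - u.
    have u0 : u != 0 by apply: contra_eq_neq h => ->; rewrite mul0r.
    lia.
  by have /eqP := int_mul_eq1_aux h' hu'; rewrite eqr_opp => /eqP.
exact: int_mul_eq1_aux.
Qed.

Lemma horner_evenodd (p : {poly int}) (x : int) :
  p.[x] = (even_poly p).[x ^+ 2] + (odd_poly p).[x ^+ 2] * x.
Proof.
by rewrite -{1}(poly_even_odd p) hornerD hornerM !horner_comp hornerXn hornerX.
Qed.

Lemma odd_polyNX (p : {poly int}) : odd_poly (p \Po (- 'X)) = - odd_poly p.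
Proof.
by rewrite compNX linearB /= odd_comp2 odd_polyMX even_comp2 sub0r.
Qed.

Lemma int_eqN0 (x : int) : x = - x -> x = 0.
Proof. lia. Qed.

Lemma even_key M c (g r : {poly int}) :
  (0 < M)%N -> (c %% 4 = 1)%N -> SN M c ->
  fN M.*2 c = g * r -> (1 < size g)%N ->
  (forall p, p %| fN M.*2 c -> (1 < size p)%N -> (size g <= size p)%N) ->
  size g = M.*2.+1.
Proof.
move=> M0 c4 IH fgr g1 gmin.
have M20 : (0 < M.*2)%N by rewrite double_gt0.
have f0 := fN_neq0 c M20.
have g0 : g != 0 by rewrite -size_poly_eq0; case: (size g) g1.
have r0 : r != 0 by apply: contraNneq f0; rewrite fgr => ->; rewrite mulr0.
have gf : g %| fN M.*2 c by rewrite fgr dvdp_mulIl.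
set gt := g \Po (- 'X).
have sgt : size gt = size g by rewrite size_comp_poly2 // size_NX.
have gt0 : gt != 0 by rewrite -size_poly_eq0 sgt size_poly_eq0.
have gtf : gt %| fN M.*2 c by rewrite -fN2N; apply: dvdp_comp_poly.
have lgt : lead_coef gt = lead_coef g * (-1) ^+ (size g).-1.
  by rewrite lead_coef_comp ?size_NX // lead_NX.
have c0 : c%:R != 0 :> int by rewrite pnatr_eq0; apply/eqP => c0; move: c4; rewrite c0.
have g00 : g.[0] != 0.
  apply/eqP => g00; case/Pdiv.Idomain.dvdpP: gf => [[k s]] /= k0 e.
  have := congr1 (horner^~ 0) e; rewrite hornerZ hornerM g00 mulr0 horner_fN0 //.
  by move/eqP; rewrite mulf_eq0 (negbTE k0) (negbTE c0).
set D := gcdp g gt.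
have [D1|D1] := leqP (size D) 1.
  have Dn0 : D != 0 by rewrite gcdp_eq0 negb_and g0.
  have cop : coprimep g gt by rewrite /coprimep eqn_leq D1 lt0n size_poly_eq0 Dn0.
  have ggt : g * gt %| fN M.*2 c by rewrite Gauss_dvdp // gf gtf.
  set Q := even_poly g ^+ 2 - 'X * odd_poly g ^+ 2.
  have eQ : g * gt = Q \Po 'X^2 := mulNX g.
  have Qf : Q %| fN M c by apply: dvdp_compX2; rewrite -eQ -fN2.
  have Q0 : Q != 0.
    by apply: contraNneq (mulf_neq0 g0 gt0); rewrite eQ => ->; rewrite comp_poly0.
  have sQ : size Q = size g.
    have := size_mul g0 gt0; rewrite eQ size_compX2 // sgt.
    have : (0 < size Q)%N by rewrite size_poly_gt0.
    move=> h1 h2.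
    have e2 : (size g + size g).-1 = ((size g).-1 * 2).+1.
      by rewrite -(prednK (ltnW g1)) addSn addnS muln2 addnn.
    rewrite e2 in h2; case: h2 => /eqP; rewrite eqn_mul2r /= => /eqP h3.
    by rewrite -(prednK h1) h3 prednK // ltnW.
  case: (IH _ Qf) => hQ; first by exfalso; lia.
  have sg : size g = M.+1 by rewrite -sQ.
  have sr : size r = M.+1.
    have := size_mul g0 r0; rewrite -fgr size_fN // sg addSn /= => h.
    by apply/eqP; rewrite -(eqn_add2l M) -h addnS addnn.
  have gtr : gt %| r.
    by rewrite -(Gauss_dvdpr _ (_ : coprimep gt g)) -?fgr // coprimep_sym.
  have gtr' : gt %= r by rewrite -dvdp_size_eqp // sgt sg sr.
  case/eqpP: gtr' => [[c1 c2]] /= /andP[c10 c20] e.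
  have lf : lead_coef g * lead_coef r = 1 by rewrite -lead_coefM -fgr lead_fN.
  have lgr : lead_coef g = lead_coef r := int_mul_eq1 lf.
  have ec : c1 * (-1) ^+ M = c2.
    have := congr1 lead_coef e; rewrite !lead_coefZ lgt sg /= -lgr => h.
    apply: (@mulIf _ (lead_coef g)); first by rewrite lead_coef_eq0.
    by rewrite -h mulrA mulrAC.
  have ss : ((-1) ^+ M * (-1) ^+ M : int) = 1.
    by rewrite -exprD addnn -mul2n exprM sqrrN expr1n.
  have er : r = (-1) ^+ M *: gt.
    apply: (scaleI_poly c20); rewrite -e -ec scalerA -mulrA ss mulr1 //.
  have := horner_fN1 M.*2 c; rewrite fgr hornerM er hornerZ /gt horner_comp.
  rewrite hornerN hornerX (horner_evenodd g 1) (horner_evenodd g (-1)) sqrrN expr1n mulr1 mulrN1.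
  move=> h; exfalso; apply: (parity (e := (even_poly g).[1]) (o := (odd_poly g).[1]) c4).
  rewrite -h -signr_odd; case: (odd M); rewrite ?expr1 ?expr0; [right|left]; ring.
have Df : D %| fN M.*2 c by apply: dvdp_trans (dvdp_gcdl _ _) gf.
have sD : size D = size g.
  by apply/eqP; rewrite eqn_leq dvdp_leq ?dvdp_gcdl // gmin.
have Dg : D %= g by rewrite -dvdp_size_eqp ?dvdp_gcdl // sD.
have ggt : g %| gt by rewrite -(eqp_dvdl _ Dg) dvdp_gcdr.
have ggt' : g %= gt by rewrite -dvdp_size_eqp // sgt.
case/eqpP: ggt' => [[c1 c2]] /= /andP[c10 c20] e.
have ec : c1 = c2 * (-1) ^+ (size g).-1.
  have := congr1 lead_coef e; rewrite !lead_coefZ lgt => h.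
  apply: (@mulIf _ (lead_coef g)); first by rewrite lead_coef_eq0.
  by rewrite h mulrA mulrAC.
have egt : gt = (-1) ^+ (size g).-1 *: g.
  by apply: (scaleI_poly c20); rewrite -e ec scalerA.
rewrite -signr_odd in egt; case: (odd (size g).-1) in egt.
  have := congr1 (horner^~ 0) egt; rewrite /gt horner_comp hornerN hornerX oppr0.
  rewrite hornerZ expr1 mulN1r => h; exfalso; move: g00.
  by rewrite (int_eqN0 h) eqxx.
rewrite expr0 scale1r in egt.
have O0 : odd_poly g = 0.
  have h := odd_polyNX g; rewrite -/gt egt in h.
  apply/polyP => i; have := congr1 (fun q : {poly int} => q`_i) h; rewrite coefN coef0 /=.
  by move=> h'; apply: int_eqN0; rewrite {1}h'.
have gE : g = even_poly g \Po 'X^2.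
  by rewrite -{1}(poly_even_odd g) O0 comp_poly0 mul0r addr0.
have Ef : even_poly g %| fN M c by apply: dvdp_compX2; rewrite -gE -fN2.
have E0 : even_poly g != 0.
  by apply: contraNneq g0 => hE0; rewrite gE hE0 comp_poly0.
have : size g = ((size (even_poly g)).-1 * 2).+1 by rewrite {1}gE size_compX2.
case: (IH _ Ef) => hE; last by rewrite hE /= => ->; rewrite -muln2.
move=> h; exfalso; move: g1; rewrite h.
by case: (size (even_poly g)) hE => [|[|]].
Qed.

Section NT.
Local Open Scope nat_scope.

Lemma logn_prod_ps (ps es : seq nat) (i : nat) :
  size ps = size es -> uniq ps -> all prime ps -> (i < size ps)%N ->
  logn (nth 0 ps i) (\prod_(j < size ps) nth 0 ps j ^ nth 0 es j) = nth 0 es i.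
Proof.
move=> sz u ap ip.
have pj : forall j : 'I_(size ps), prime (nth 0 ps j).
  by move=> j; apply: (allP ap); rewrite mem_nth.
have -> : logn (nth 0 ps i) (\prod_(j < size ps) nth 0 ps j ^ nth 0 es j)
   = \sum_(j < size ps) logn (nth 0 ps i) (nth 0 ps j ^ nth 0 es j).
  pose K := fun (x y : nat) => logn (nth 0 ps i) y = x /\ (0 < y).
  suff [] : K (\sum_(j < size ps) logn (nth 0 ps i) (nth 0 ps j ^ nth 0 es j))
              (\prod_(j < size ps) nth 0 ps j ^ nth 0 es j) by [].
  apply: (big_rec2 K); first by rewrite /K logn1.
  move=> j y1 y2 _ [h1 h2]; split; last by rewrite muln_gt0 h2 expn_gt0 prime_gt0.
  by rewrite lognM ?h1 // expn_gt0 prime_gt0.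
rewrite (bigD1 (Ordinal ip)) //= big1 ?addn0.
  by rewrite lognX logn_prime ?eqxx ?muln1 // (pj (Ordinal ip)).
move=> j /eqP nji; rewrite lognX logn_prime ?(pj j) //.
rewrite nth_uniq ?ltn_ord //.
have : (val j != i) by apply/eqP => h; apply: nji; apply: val_inj.
by rewrite eq_sym => /negbTE ->; rewrite muln0.
Qed.

Lemma dvdn_gcd_list (N d : nat) (es : seq nat) :
  (forall x, x \in es -> N %| d * x) -> N %| d * \big[gcdn/0]_(x <- es) x.
Proof.
elim: es => [|x es IH] h; first by rewrite big_nil muln0 dvdn0.
rewrite big_cons muln_gcdr dvdn_gcd h ?mem_head // IH // => y ye.
by apply: h; rewrite in_cons ye orbT.
Qed.

Lemma nt_key (n b r N d a : nat) : odd N -> (N %| n) -> propP n b ->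
  a ^ N = (b ^ (2 ^ r)) ^ d -> N %| d.
Proof.
move=> oN Nn pP e.
have cNm : coprime N (2 ^ r) by rewrite coprime_sym coprimeXl // coprime2n.
case: pP => [pb | [ps [es [k [[sz s2 u ap] [[epos g1 k0 ck] bE]]]]]].
  have := congr1 (logn b) e; rewrite !lognX (logn_prime _ pb) eqxx muln1 => h.
  by rewrite -(Gauss_dvdl _ cNm) -h dvdn_mulr.
have cNk : coprime N k by rewrite coprime_sym (coprime_dvdr Nn).
rewrite -(muln1 d) -g1; apply: dvdn_gcd_list => x /(nthP 0) [i ip <-].
rewrite -sz in ip.
have := congr1 (logn (nth 0 ps i)) e; rewrite bE !lognX logn_prod_ps // => h.
have : N %| d * (2 ^ r * (k * nth 0 es i)) by rewrite -h dvdn_mulr.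
rewrite mulnCA Gauss_dvdr // mulnCA Gauss_dvdr //.
Qed.

End NT.

Lemma int_unit1 (u v : int) : u * v = 1 -> `|u| = 1.
Proof.
move=> h; have := int_mul_eq1 h => uv; subst v.
have [hu|hu] : (0 <= u \/ u < 0) by lia.
  rewrite ger0_norm //; nia.
rewrite ltr0_norm //; nia.
Qed.

Lemma prod_const_seq' (R : comNzRingType) (T : Type) (s : seq T) (x : R) :
  \prod_(z <- s) x = x ^+ size s.
Proof. by elim: s => [|a s IH]; rewrite ?big_nil ?big_cons ?IH ?exprS. Qed.

Lemma odd_key N c (h r : {poly int}) :
  (0 < N)%N -> fN N c = h * r -> exists a : nat, (a ^ N = c ^ (size h).-1)%N.
Proof.
move=> N0 e.
pose hC := map_poly (intr : int -> algC) h.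
pose rC := map_poly (intr : int -> algC) r.
have eC : 'X^N + (c%:R)%:P = hC * rC.
  have := congr1 (map_poly (intr : int -> algC)) e.
  by rewrite rmorphM /fN rmorphD /= map_polyXn map_polyC /= rmorph_nat.
have [rs hrs] := closed_field_poly_normal hC.
have lf : lead_coef h * lead_coef r = 1 by rewrite -lead_coefM -e lead_fN.
have lh : `|lead_coef hC| = 1.
  rewrite (lead_coef_map_inj (@intr_inj algC)) //.
  by rewrite -intr_norm (int_unit1 lf).
have lh0 : lead_coef hC != 0 by rewrite -normr_eq0 lh oner_eq0.
have rz : forall z, z \in rs -> z ^+ N = - c%:R.
  move=> z zr; have : root hC z by rewrite hrs rootZ // root_prod_XsubC.
  move=> /rootP hz; have := congr1 (horner^~ z) eC.
  rewrite hornerM hz mul0r hornerD hornerXn hornerC => /eqP.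
  by rewrite addr_eq0 => /eqP.
have sh : size h = (size rs).+1.
  have -> : size h = size hC by rewrite (size_map_inj_poly (@intr_inj algC)).
  by rewrite hrs size_scale // size_prod_XsubC.
exists `|h.[0]|%N; rewrite sh /=.
apply/eqP; rewrite -(@eqr_nat algC) !natrX natr_absz intr_norm.
rewrite -(horner_map (intr : int -> algC)) rmorph0 /= -/hC hrs hornerZ horner_prod.
rewrite normrM lh mul1r normr_prod -prodrXl.
rewrite (eq_big_seq (fun _ => c%:R)) ?prod_const_seq' //.
move=> z zr; rewrite hornerXsubC sub0r normrN -normrX rz // normrN normr_nat //.
Qed.

Lemma odd_step (n b r N : nat) : odd N -> (0 < N)%N -> (N %| n)%N -> propP n b ->
  SN N (b ^ (2 ^ r)).
Proof.
move=> oN N0 Nn pP q qf.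
have [q1|q1] := leqP (size q) 1; first by left.
right.
have f0 := fN_neq0 (b ^ (2 ^ r)) N0.
have sq : (size q <= N.+1)%N by rewrite -(size_fN (b ^ (2 ^ r)) N0) dvdp_leq.
have [r' e] := dvdpP_int qf.
have [a ha] := odd_key N0 e.
rewrite size_zprimitive in ha.
have Nd := nt_key oN Nn pP ha.
have d0 : (0 < (size q).-1)%N by rewrite -subn1 subn_gt0.
have := dvdn_leq d0 Nd.
move: sq q1 d0; case: (size q) => [|[|k]] //= sq _ _ h.
by apply/eqP; rewrite eqSS eqn_leq h -ltnS sq.
Qed.

Lemma size_min_ind (N c : nat) :
  (0 < N)%N ->
  (forall g r : {poly int}, fN N c = g * r -> (1 < size g)%N ->
    (forall p, p %| fN N c -> (1 < size p)%N -> (size g <= size p)%N) ->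
    size g = N.+1) -> SN N c.
Proof.
move=> N0 key q qf.
have [q1|q1] := leqP (size q) 1; first by left.
right.
have f0 := fN_neq0 c N0.
move: {2}(size q) (leqnn (size q)) => k; elim: k q qf q1 => [|k IH] q qf q1 hk.
  by move: q1; rewrite ltnNge (leq_trans hk).
have [r' e] := dvdpP_int qf.
rewrite -(size_zprimitive q); apply: key e _ _; rewrite size_zprimitive //.
move=> p pf p1; rewrite leqNgt; apply/negP => pq.
have sp := IH p pf p1 (leq_trans pq hk).
have := dvdp_leq f0 qf; rewrite size_fN // -sp => h.
by move: (leq_trans pq h); rewrite ltnn.
Qed.

Lemma c4_lemma (b r : nat) : (1 <= r)%N -> odd b -> ((b ^ (2 ^ r)) %% 4 = 1)%N.
Proof.
move=> r1 ob.
  case: r r1 => // r _; rewrite expnS expnM -modnXm.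
have -> : (b ^ 2 %% 4 = 1)%N.
  rewrite -(odd_double_half b) ob add1n -mul2n.
  move: (b./2) => k; rewrite expnS expn1 /=.
  have -> : ((2 * k).+1 * (2 * k).+1 = 4 * (k * k + k) + 1)%N by ring.
  by rewrite mulnC modnMDl.
by rewrite exp1n.
Qed.

Lemma main_SN (n b r : nat) : (1 <= r)%N -> odd b -> propP n b ->
  forall N, (0 < N)%N -> (N %| n)%N -> SN N (b ^ (2 ^ r)).
Proof.
move=> r1 ob pP N; elim/ltn_ind: N => N IH N0 Nn.
case oN : (odd N); first exact: (@odd_step n b r N oN N0 Nn pP).
have NE : N = (N./2).*2 by rewrite -{1}(odd_double_half N) oN add0n.
have M0 : (0 < N./2)%N by move: N0; rewrite {1}NE double_gt0.
have c4 := c4_lemma r1 ob.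
have IHM : SN N./2 (b ^ (2 ^ r)).
  have lt : (N./2 < N)%N by rewrite [X in (_ < X)%N]NE -addnn -{1}(addn0 N./2) ltn_add2l.
  apply: IH => //.
  by apply: dvdn_trans Nn; rewrite [X in (_ %| X)%N]NE -muln2 dvdn_mulr.
rewrite NE; apply: size_min_ind; first by rewrite double_gt0.
move=> g r' e g1 gmin; exact: (even_key M0 c4 IHM e g1 gmin).
Qed.

Theorem lemma5 (r n b : nat) :
  (1 <= r)%N -> (0 < n)%N -> (2 ^ r %| n)%N ->
  odd b -> (0 < b)%N -> propP n b ->
  irreducible_over_Z ('X^n + ((b ^ (2 ^ r))%N)%:R%:P : {poly int}).
Proof.
move=> r1 n0 mn ob b0 pP.
have S := main_SN r1 ob pP n0 (dvdnn n).
split; first exact: monicXnaddC.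
split; first by rewrite size_XnaddC.
move=> q r' e.
have f0 := fN_neq0 (b ^ (2 ^ r)) n0.
have := S q; rewrite /fN e dvdp_mulIl => /(_ isT) [->|sq]; first by left.
right.
have q0 : q != 0 by rewrite -size_poly_eq0 sq.
have r0 : r' != 0 by apply: contraNneq f0; rewrite /fN e => ->; rewrite mulr0.
have := size_mul q0 r0; rewrite -e size_XnaddC // sq addSn /= => h.
have : (n + size r' <= n + 1)%N by rewrite -h addn1.
by rewrite leq_add2l.
Qed.
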